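(* There exists a full amicable orthogonal design $AOD\big(168;\ 4,164;\ 4,164\big)$.
   Context: An orthogonal design $OD(m;c_1,\ldots,c_k)$ is an $m\times m$ matrix $X$ with entries from $\{0,\pm x_1,\ldots,\pm x_k\}$, where $x_1,\ldots,x_k$ are commuting indeterminates, such that $XX^{\rm T}=(\sum_j c_jx_j^2)I_m$. An amicable orthogonal design $AOD(m;c_1,\ldots,c_k;d_1,\ldots,d_\ell)$ is a pair $(X;Y)$ where $X$ is an $OD(m;c_1,\ldots,c_k)$ in indeterminates $x_1,\ldots,x_k$, $Y$ is an $OD(m;d_1,\ldots,d_\ell)$ in indeterminates $y_1,\ldots,y_\ell$ disjoint from the $x_i$, and $XY^{\rm T}=YX^{\rm T}$. It is full if neither $X$ nor $Y$ has a zero entry. *)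

(* Defs.v *)
From HB Require Import structures.
From mathcomp Require Import all_boot all_order all_algebra.
Set Implicit Arguments. Unset Strict Implicit. Unset Printing Implicit Defensive.
Import GRing.Theory.
Local Open Scope ring_scope.

(* A formal entry of a design in k indeterminates x_0,...,x_{k-1}:
   None = 0,  Some (false, j) = + x_j,  Some (true, j) = - x_j. *)
Definition sym (k : nat) := option (bool * 'I_k).

Definition design (m k : nat) := 'M[sym k]_m.

Definition eval_sym (R : pzRingType) (k : nat) (x : 'I_k -> R) (s : sym k) : R :=
  match s with
  | None => 0
  | Some (b, j) => (-1) ^+ b * x j
  end.

Definition evalD (R : pzRingType) (m k : nat) (X : design m k) (x : 'I_k -> R)
  : 'M[R]_m := \matrix_(i, j) eval_sym x (X i j).

(* X X^T = (sum_j c_j x_j^2) I_m as an identity in commuting indeterminates: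
   we require it for every value of the indeterminates in every commutative
   ring (this includes the polynomial ring itself, so it is equivalent). *)
Definition is_OD (m k : nat) (c : 'I_k -> nat) (X : design m k) : Prop :=
  forall (R : comNzRingType) (x : 'I_k -> R),
    evalD X x *m (evalD X x)^T = (\sum_(j < k) (c j)%:R * x j ^+ 2)%:M.

Definition is_AOD (m k l : nat) (c : 'I_k -> nat) (d : 'I_l -> nat)
  (X : design m k) (Y : design m l) : Prop :=
  [/\ is_OD c X, is_OD d Y &
      forall (R : comNzRingType) (x : 'I_k -> R) (y : 'I_l -> R),
        evalD X x *m (evalD Y y)^T = evalD Y y *m (evalD X x)^T].

Definition full_design (m k : nat) (X : design m k) : Prop :=
  forall i j, X i j <> None.

Definition coefs (s : seq nat) : 'I_(size s) -> nat := fun j => nth 0%N s j.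
Arguments coefs s : clear implicits.

(* Main.v *)
Require Import Defs.
From mathcomp Require Import all_boot all_order all_algebra.
From mathcomp Require Import mxtens.
Set Implicit Arguments. Unset Strict Implicit. Unset Printing Implicit Defensive.
Import GRing.Theory.
Local Open Scope ring_scope.

Definition wl : seq (seq bool) :=
  [:: [:: false; false; false; false; false; false; false; false; false; false; false; false; false; false; false; false; false; false; false; false; false; false; false; false; false; false; false; false; false; false; false; false; false; false; false; false; false; false; false; false; false; false]; [:: false; false; false; false; true; false; false; true; true; false; false; false; true; true; true; true; true; false; true; false; true; false; false; true; false; true; false; true; true; true; true; true; false; false; false; true; true; false; false; true; false; false]; [:: false; false; false; false; false; true; false; false; true; true; false; false; false; true; true; true; true; true; false; true; false; true; false; false; true; false; true; false; true; true; true; true; true; false; false; false; true; true; false; false; true; false]; [:: false; false; false; false; false; false; true; false; false; true; true; false; false; false; true; true; true; true; true; false; true; false; true; false; false; true; false; true; false; true; true; true; true; true; false; false; false; true; true; false; false; true]; [:: false; true; false; false; false; false; false; true; false; false; true; true; false; false; false; true; true; true; true; true; false; true; false; true; false; false; true; false; true; false; true; true; true; true; true; false; false; false; true; true; false; false]; [:: false; false; true; false; false; false; false; false; true; false; false; true; true; false; false; false; true; true; true; true; true; false; true; false; true; false; false; true; false; true; false; true; true; true; true; true; false; false; false; true; true; false]; [:: false; false; false; true; false; false; false; false; false; true; false; false; true; true; false; false; false; true; true; true; true; true; false; true; false; true; false; false; true; false; true; false; true; true; true; true; true; false; false; false; true; true]; [:: false; true; false; false; true; false; false; false; false; false; true;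 false; false; true; true; false; false; false; true; true; true; true; true; false; true; false; true; false; false; true; false; true; false; true; true; true; true; true; false; false; false; true]; [:: false; true; true; false; false; true; false; false; false; false; false; true; false; false; true; true; false; false; false; true; true; true; true; true; false; true; false; true; false; false; true; false; true; false; true; true; true; true; true; false; false; false]; [:: false; false; true; true; false; false; true; false; false; false; false; false; true; false; false; true; true; false; false; false; true; true; true; true; true; false; true; false; true; false; false; true; false; true; false; true; true; true; true; true; false; false]; [:: false; false; false; true; true; false; false; true; false; false; false; false; false; true; false; false; true; true; false; false; false; true; true; true; true; true; false; true; false; true; false; false; true; false; true; false; true; true; true; true; true; false]; [:: false; false; false; false; true; true; false; false; true; false; false; false; false; false; true; false; false; true; true; false; false; false; true; true; true; true; true; false; true; false; true; false; false; true; false; true; false; true; true; true; true; true]; [:: false; true; false; false; false; true; true; false; false; true; false; false; false; false; false; true; false; false; true; true; false; false; false; true; true; true; true; true; false; true; false; true; false; false; true; false; true; false; true; true; true; true]; [:: false; true; true; false; false; false; true; true; false; false; true; false; false; false; false; false; true; false; false; true; true; false; false; false; true; true; true; true; true; false; true; false; true; false; false; true; false; true; false; true; true; true]; [:: false; true; true; true; false; false; false; true; true; false; false; true; false; false; false; false; false; true; false; false; true; true; false; false; false; true; true; true; true; true; false; true; false; true; false; false; true; false; true; false; true; true]; [:: false; true; true; true; true; false; false; false; true; true; false; false; true; false; false; false; false; false; true; false; false; true; true; false; false; false; true; true; true; true; true; false; true; false; true; false; false; true; false; true; false; true]; [:: false; true; true; true; true; true; false; false; false; true; true; false; false; true; false;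 false; false; false; false; true; false; false; true; true; false; false; false; true; true; true; true; true; false; true; false; true; false; false; true; false; true; false]; [:: false; false; true; true; true; true; true; false; false; false; true; true; false; false; true; false; false; false; false; false; true; false; false; true; true; false; false; false; true; true; true; true; true; false; true; false; true; false; false; true; false; true]; [:: false; true; false; true; true; true; true; true; false; false; false; true; true; false; false; true; false; false; false; false; false; true; false; false; true; true; false; false; false; true; true; true; true; true; false; true; false; true; false; false; true; false]; [:: false; false; true; false; true; true; true; true; true; false; false; false; true; true; false; false; true; false; false; false; false; false; true; false; false; true; true; false; false; false; true; true; true; true; true; false; true; false; true; false; false; true]; [:: false; true; false; true; false; true; true; true; true; true; false; false; false; true; true; false; false; true; false; false; false; false; false; true; false; false; true; true; false; false; false; true; true; true; true; true; false; true; false; true; false; false]; [:: false; false; true; false; true; false; true; true; true; true; true; false; false; false; true; true; false; false; true; false; false; false; false; false; true; false; false; true; true; false; false; false; true; true; true; true; true; false; true; false; true; false]; [:: false; false; false; true; false; true; false; true; true; true; true; true; false; false; false; true; true; false; false; true; false; false; false; false; false; true; false; false; true; true; false; false; false; true; true; true; true; true; false; true; false; true]; [:: false; true; false; false; true; false; true; false; true; true; true; true; true; false; false; false; true; true; false; false; true; false; false; false; false; false; true; false; false; true; true; false; false; false; true; true; true; true; true; false; true; false]; [:: false; false; true; false; false; true; false; true; false; true; true; true; true; true; false; false; false; true; true; false; false; true; false; false; false; false; false; true; false; false; true; true; false; false; false; true; true; true; true; true; false; true]; [:: false; true; false; true; false; false; true; false; true; false; true; true; true; true; true; false; false; false; true;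 true; false; false; true; false; false; false; false; false; true; false; false; true; true; false; false; false; true; true; true; true; true; false]; [:: false; false; true; false; true; false; false; true; false; true; false; true; true; true; true; true; false; false; false; true; true; false; false; true; false; false; false; false; false; true; false; false; true; true; false; false; false; true; true; true; true; true]; [:: false; true; false; true; false; true; false; false; true; false; true; false; true; true; true; true; true; false; false; false; true; true; false; false; true; false; false; false; false; false; true; false; false; true; true; false; false; false; true; true; true; true]; [:: false; true; true; false; true; false; true; false; false; true; false; true; false; true; true; true; true; true; false; false; false; true; true; false; false; true; false; false; false; false; false; true; false; false; true; true; false; false; false; true; true; true]; [:: false; true; true; true; false; true; false; true; false; false; true; false; true; false; true; true; true; true; true; false; false; false; true; true; false; false; true; false; false; false; false; false; true; false; false; true; true; false; false; false; true; true]; [:: false; true; true; true; true; false; true; false; true; false; false; true; false; true; false; true; true; true; true; true; false; false; false; true; true; false; false; true; false; false; false; false; false; true; false; false; true; true; false; false; false; true]; [:: false; true; true; true; true; true; false; true; false; true; false; false; true; false; true; false; true; true; true; true; true; false; false; false; true; true; false; false; true; false; false; false; false; false; true; false; false; true; true; false; false; false]; [:: false; false; true; true; true; true; true; false; true; false; true; false; false; true; false; true; false; true; true; true; true; true; false; false; false; true; true; false; false; true; false; false; false; false; false; true; false; false; true; true; false; false]; [:: false; false; false; true; true; true; true; true; false; true; false; true; false; false; true; false; true; false; true; true; true; true; true; false; false; false; true; true; false; false; true; false; false; false; false; false; true; false; false; true; true; false]; [:: false; false; false; false; true; true; true; true; true; false; true; false; true; false; false; true; false; true; false; true; true; true; true;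 true; false; false; false; true; true; false; false; true; false; false; false; false; false; true; false; false; true; true]; [:: false; true; false; false; false; true; true; true; true; true; false; true; false; true; false; false; true; false; true; false; true; true; true; true; true; false; false; false; true; true; false; false; true; false; false; false; false; false; true; false; false; true]; [:: false; true; true; false; false; false; true; true; true; true; true; false; true; false; true; false; false; true; false; true; false; true; true; true; true; true; false; false; false; true; true; false; false; true; false; false; false; false; false; true; false; false]; [:: false; false; true; true; false; false; false; true; true; true; true; true; false; true; false; true; false; false; true; false; true; false; true; true; true; true; true; false; false; false; true; true; false; false; true; false; false; false; false; false; true; false]; [:: false; false; false; true; true; false; false; false; true; true; true; true; true; false; true; false; true; false; false; true; false; true; false; true; true; true; true; true; false; false; false; true; true; false; false; true; false; false; false; false; false; true]; [:: false; true; false; false; true; true; false; false; false; true; true; true; true; true; false; true; false; true; false; false; true; false; true; false; true; true; true; true; true; false; false; false; true; true; false; false; true; false; false; false; false; false]; [:: false; false; true; false; false; true; true; false; false; false; true; true; true; true; true; false; true; false; true; false; false; true; false; true; false; true; true; true; true; true; false; false; false; true; true; false; false; true; false; false; false; false]; [:: false; false; false; true; false; false; true; true; false; false; false; true; true; true; true; true; false; true; false; true; false; false; true; false; true; false; true; true; true; true; true; false; false; false; true; true; false; false; true; false; false; false]].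

Definition al : seq (seq bool) :=
  [:: [:: false; false; false; false]; [:: false; false; true; true]; [:: false; true; false; true]; [:: false; true; true; false]].

Definition bl : seq (seq bool) :=
  [:: [:: false; false; true; true]; [:: true; true; true; true]; [:: false; true; true; false]; [:: true; false; true; false]].

Definition cl : seq (seq bool) :=
  [:: [:: false; false; false; false]; [:: true; true; false; false]; [:: false; true; false; true]; [:: true; false; false; true]].

Definition dl : seq (seq bool) :=
  [:: [:: false; false; true; true]; [:: false; false; false; false]; [:: false; true; true; false]; [:: false; true; false; true]].

Definition bit (l : seq (seq bool)) (i j : nat) : bool := nth false (nth [::] l i) j.
Definition sg (b : bool) : int := if b then -1 else 1.
Definition fw (i j : nat) : int := if i == j then 0 else sg (bit wl i j).
Definition fl (l : seq (seq bool)) (i j : nat) : int := sg (bit l i j).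
Definition dot (n : nat) (f g : nat -> nat -> int) (i j : nat) : int :=
  foldr (fun k acc => f i k * g j k + acc) 0 (iota 0 n).
Definition sc (c : int) (i j : nat) : int := if i == j then c else 0.
Definition gridb (n : nat) (f g : nat -> nat -> int) : bool :=
  all (fun i => all (fun j => f i j == g i j) (iota 0 n)) (iota 0 n).

Lemma t1 : gridb 42 (dot 42 fw fw) (sc 41).
Proof. vm_compute. reflexivity. Qed.
Lemma t2 : gridb 42 fw (fun i j => fw j i).
Proof. vm_compute. reflexivity. Qed.

Section Gen.
Variable R : comNzRingType.

Definition Mat (n : nat) (f : nat -> nat -> int) : 'M[R]_n := \matrix_(i, j) (f i j)%:~R.

Lemma gridP n f g : gridb n f g -> forall i j : nat, (i < n)%N -> (j < n)%N -> f i j = g i j.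
Proof.
move=> /allP H i j hi hj.
have /allP H2 : all (fun j => f i j == g i j) (iota 0 n) by apply: H; rewrite mem_iota add0n.
by apply/eqP; apply: H2; rewrite mem_iota add0n.
Qed.

Lemma Mat_eq n f g : gridb n f g -> Mat n f = Mat n g.
Proof. by move=> H; apply/matrixP=> i j; rewrite !mxE (gridP H). Qed.

Lemma sum_foldr (F : nat -> int) r : \sum_(k <- r) F k = foldr (fun k acc => F k + acc) 0 r.
Proof. by elim: r => [|a r IH]; rewrite ?big_nil ?big_cons ?IH. Qed.

Lemma Mat_mul n f g : Mat n f *m (Mat n g)^T = Mat n (dot n f g).
Proof.
apply/matrixP=> i j; rewrite !mxE /dot -sum_foldr.
have -> : \sum_(k <- iota 0 n) f i k * g j k = \sum_(k < n) f i k * g j k.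
  by rewrite -(big_mkord xpredT (fun k => f i k * g j k)) /index_iota subn0.
rewrite rmorph_sum /=.
by apply: eq_bigr => k _; rewrite !mxE rmorphM.
Qed.

Lemma Mat_sc n c : Mat n (sc c) = (c%:~R)%:M.
Proof. apply/matrixP=> i j; rewrite !mxE /sc; case: (i =P j) => [->|h]; first by rewrite !eqxx. have h1 : (i == j) = false by apply/eqP. have h2 : (nat_of_ord i == nat_of_ord j) = false by apply/eqP => e; apply: h; apply: val_inj. by rewrite h2. Qed.

Lemma Mat_tr n f : (Mat n f)^T = Mat n (fun i j => f j i).
Proof. by apply/matrixP=> i j; rewrite !mxE. Qed.

Lemma Mat_opp n f : Mat n (fun i j => - f i j) = - Mat n f.
Proof. by apply/matrixP=> i j; rewrite !mxE rmorphN. Qed.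
End Gen.

Lemma tA : gridb 4 (dot 4 (fl al) (fl al)) (sc 4). Proof. vm_compute. reflexivity. Qed.
Lemma tB : gridb 4 (dot 4 (fl bl) (fl bl)) (sc 4). Proof. vm_compute. reflexivity. Qed.
Lemma tC : gridb 4 (dot 4 (fl cl) (fl cl)) (sc 4). Proof. vm_compute. reflexivity. Qed.
Lemma tD : gridb 4 (dot 4 (fl dl) (fl dl)) (sc 4). Proof. vm_compute. reflexivity. Qed.
Lemma tAB : gridb 4 (dot 4 (fl al) (fl bl)) (fun i j => - dot 4 (fl bl) (fl al) i j). Proof. vm_compute. reflexivity. Qed.
Lemma tCD : gridb 4 (dot 4 (fl cl) (fl dl)) (fun i j => - dot 4 (fl dl) (fl cl) i j). Proof. vm_compute. reflexivity. Qed.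
Lemma tAC : gridb 4 (dot 4 (fl al) (fl cl)) (dot 4 (fl cl) (fl al)). Proof. vm_compute. reflexivity. Qed.
Lemma tAD : gridb 4 (dot 4 (fl al) (fl dl)) (dot 4 (fl dl) (fl al)). Proof. vm_compute. reflexivity. Qed.
Lemma tBC : gridb 4 (dot 4 (fl bl) (fl cl)) (dot 4 (fl cl) (fl bl)). Proof. vm_compute. reflexivity. Qed.
Lemma tBD : gridb 4 (dot 4 (fl bl) (fl dl)) (dot 4 (fl dl) (fl bl)). Proof. vm_compute. reflexivity. Qed.

Section Gen2.
Variable R : comNzRingType.

Lemma tens_scal m n (a b : R) : ((a%:M : 'M_m) *t (b%:M : 'M_n)) = (a * b)%:M.
Proof.
apply/matrixP=> i j.
case: (mxtens_indexP i)=> i0 i1; case: (mxtens_indexP j)=> j0 j1.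
rewrite tensmxE !mxE (inj_eq (can_inj (@mxtens_indexK _ _))) xpair_eqE.
by case: (i0 == j0); case: (i1 == j1); rewrite /= ?mulr1n ?mulr0n ?mulr0 ?mul0r.
Qed.

Lemma tensmxN m n p q (M : 'M[R]_(m, n)) (N : 'M[R]_(p, q)) : M *t (- N) = - (M *t N).
Proof. by apply/matrixP=> i j; rewrite !mxE mulrN. Qed.

Lemma OD_gen N (P Q : 'M[R]_N) (a b x0 x1 : R) :
  P *m P^T = a%:M -> Q *m Q^T = b%:M -> P *m Q^T + Q *m P^T = 0 ->
  (x0 *: P + x1 *: Q) *m (x0 *: P + x1 *: Q)^T = (x0 ^+ 2 * a + x1 ^+ 2 * b)%:M.
Proof.
move=> hP hQ hPQ.
rewrite linearD !linearZ /= mulmxDl !mulmxDr -!scalemxAl -!scalemxAr !scalerA.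
rewrite hP hQ [x1 * x0]mulrC -addrA [X in _ + X]addrA -scalerDr hPQ scaler0 add0r.
by rewrite !scale_scalar_mx raddfD /= -!expr2.
Qed.

Lemma AM_gen N (P Q U V : 'M[R]_N) (x0 x1 y0 y1 : R) :
  P *m U^T = U *m P^T -> P *m V^T = V *m P^T ->
  Q *m U^T = U *m Q^T -> Q *m V^T = V *m Q^T ->
  (x0 *: P + x1 *: Q) *m (y0 *: U + y1 *: V)^T = (y0 *: U + y1 *: V) *m (x0 *: P + x1 *: Q)^T.
Proof.
move=> h1 h2 h3 h4.
rewrite !linearD !linearZ /= !mulmxDl -!scalemxAl !scalerDr !scalerA.
rewrite h1 h2 h3 h4 [y0 * x0]mulrC [y0 * x1]mulrC [y1 * x0]mulrC [y1 * x1]mulrC.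
by rewrite addrACA.
Qed.
End Gen2.

Definition xent (l1 l2 : seq (seq bool)) (i j : 'I_(42 * 4)) : sym 2 :=
  if (mxtens_unindex i).1 == (mxtens_unindex j).1
  then Some (bit l1 (mxtens_unindex i).2 (mxtens_unindex j).2, ord0)
  else Some (bit wl (mxtens_unindex i).1 (mxtens_unindex j).1
             (+) bit l2 (mxtens_unindex i).2 (mxtens_unindex j).2, ord_max).

Definition Xd (l1 l2 : seq (seq bool)) : design 168 2 := \matrix_(i, j) xent l1 l2 i j.

Lemma full_Xd l1 l2 : full_design (Xd l1 l2).
Proof. by move=> i j; rewrite mxE /xent; case: ifP. Qed.

Section Main.
Variable R : comNzRingType.

Lemma sgE b : (sg b)%:~R = (-1) ^+ b :> R.
Proof. by case: b. Qed.

Lemma evalX l1 l2 (x : 'I_2 -> R) :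
  evalD (Xd l1 l2) x = x ord0 *: ((1%:M : 'M_42) *t Mat R 4 (fl l1))
                      + x ord_max *: (Mat R 42 fw *t Mat R 4 (fl l2)).
Proof.
apply/matrixP=> i j.
case: (@mxtens_indexP 42 4 i) => a p; case: (@mxtens_indexP 42 4 j) => b q.
rewrite /evalD !mxE /xent !mxtens_indexK /=.
rewrite /fw /fl; case: (a =P b) => [<-|h].
  by rewrite !eqxx /= sgE mul1r mul0r mulr0 addr0 mulrC.
have h2 : (nat_of_ord a == nat_of_ord b) = false by apply/eqP => e; apply: h; apply: val_inj.
rewrite h2 /= !sgE signr_addb mul0r mulr0 add0r mulrC.
reflexivity. Qed.
End Main.

Section Final.
Variable R : comNzRingType.
Local Notation I := (1%:M : 'M[R]_42).
Local Notation MW := (Mat R 42 fw).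

Lemma hW : MW^T = MW.
Proof. by rewrite Mat_tr; symmetry; apply: Mat_eq; exact: t2. Qed.
Lemma hWW : MW *m MW^T = (41%:~R)%:M.
Proof. by rewrite Mat_mul (Mat_eq _ t1) Mat_sc. Qed.

Lemma hsq l c : gridb 4 (dot 4 (fl l) (fl l)) (sc c) -> Mat R 4 (fl l) *m (Mat R 4 (fl l))^T = (c%:~R)%:M.
Proof. by move=> t; rewrite Mat_mul (Mat_eq _ t) Mat_sc. Qed.
Lemma hskew l1 l2 : gridb 4 (dot 4 (fl l1) (fl l2)) (fun i j => - dot 4 (fl l2) (fl l1) i j) ->
  Mat R 4 (fl l1) *m (Mat R 4 (fl l2))^T = - (Mat R 4 (fl l2) *m (Mat R 4 (fl l1))^T).
Proof. by move=> t; rewrite !Mat_mul (Mat_eq _ t) Mat_opp. Qed.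
Lemma hsym l1 l2 : gridb 4 (dot 4 (fl l1) (fl l2)) (dot 4 (fl l2) (fl l1)) ->
  Mat R 4 (fl l1) *m (Mat R 4 (fl l2))^T = Mat R 4 (fl l2) *m (Mat R 4 (fl l1))^T.
Proof. by move=> t; rewrite !Mat_mul (Mat_eq _ t). Qed.

Lemma OD_tens (A B : 'M[R]_4) c :
  A *m A^T = c%:M -> B *m B^T = c%:M -> A *m B^T = - (B *m A^T) ->
  let P := I *t A in let Q := MW *t B in
  [/\ P *m P^T = c%:M, Q *m Q^T = (41%:~R * c)%:M & P *m Q^T + Q *m P^T = 0].
Proof.
move=> hA hB hAB P Q; rewrite /P /Q !trmx_tens !tensmx_mul trmx1 !mulmx1 mul1mx hWW hW.
rewrite hA hB !tens_scal mul1r; split => //.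
by rewrite hAB tensmxN addNr.
Qed.

Lemma AM_tens (A B C D : 'M[R]_4) :
  A *m C^T = C *m A^T -> A *m D^T = D *m A^T ->
  B *m C^T = C *m B^T -> B *m D^T = D *m B^T ->
  let P := I *t A in let Q := MW *t B in
  let U := I *t C in let V := MW *t D in
  [/\ P *m U^T = U *m P^T, P *m V^T = V *m P^T,
      Q *m U^T = U *m Q^T & Q *m V^T = V *m Q^T].
Proof.
move=> h1 h2 h3 h4 P Q U V; rewrite /P /Q /U /V !trmx_tens !tensmx_mul trmx1 !mulmx1 !mul1mx hW.
by rewrite h1 h2 h3 h4.
Qed.
End Final.

Lemma OD_Xd l1 l2 :
  gridb 4 (dot 4 (fl l1) (fl l1)) (sc 4) -> gridb 4 (dot 4 (fl l2) (fl l2)) (sc 4) ->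
  gridb 4 (dot 4 (fl l1) (fl l2)) (fun i j => - dot 4 (fl l2) (fl l1) i j) ->
  is_OD (coefs [:: 4; 164]%N) (Xd l1 l2).
Proof.
move=> ta tb tab R x; rewrite evalX.
have [h1 h2 h3] := OD_tens (hsq R ta) (hsq R tb) (hskew R tab).
rewrite (OD_gen _ _ h1 h2 h3) big_ord_recr big_ord_recr big_ord0 /=.
have -> : widen_ord (leqnSn 1) ord_max = ord0 :> 'I_2 by apply: val_inj.
rewrite add0r -intrM mulrC [_ * x ord_max ^+ 2]mulrC.
reflexivity.
Qed.

Theorem mainTheorem5 :
  exists (X : design 168 2) (Y : design 168 2),
    is_AOD (coefs [:: 4; 164]%N) (coefs [:: 4; 164]%N) X Y /\
    full_design X /\ full_design Y.
Proof.
exists (Xd al bl), (Xd cl dl); split; last by split; apply: full_Xd.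
split.
- exact: OD_Xd tA tB tAB.
- exact: OD_Xd tC tD tCD.
- move=> R x y; rewrite !evalX.
  have [h1 h2 h3 h4] := AM_tens (hsym R tAC) (hsym R tAD) (hsym R tBC) (hsym R tBD).
  exact: AM_gen h1 h2 h3 h4.
Qed.
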